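(* Let $U$ be a nonempty finite set, $R\subseteq U\times U$ serial and transitive, and $r$ the rank function of the matroid $M(Reg(U,R))$. Then $r(X)=h(X)$ for every $X\in Reg(U,R)$.
   Context: $R_s(x)=\{y\in U\mid xRy\}$; $\underline{R}(X)=\{x\mid R_s(x)\subseteq X\}$, $\overline{R}(X)=\{x\mid R_s(x)\cap X\neq\emptyset\}$; $X$ is regular if $X=\underline{R}(\overline{R}(X))$, and $Reg(U,R)$ is the lattice of regular sets under inclusion, with least element $\emptyset$. $h(A)$ is the length of a maximal chain in $[\emptyset,A]$. $M(Reg(U,R))$ is the matroid on $U$ with independent sets $\mathbf{I}(Reg(U,R);h)=\{X\subseteq U\mid h(Y)\ge|X\cap Y|\ \forall Y\in Reg(U,R)\}$; its rank function is $r(X)=\max\{|I|\mid I\subseteq X,\ I\in\mathbf{I}\}$. *)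

(* Defs.v *)
From mathcomp Require Import all_boot.
Set Implicit Arguments. Unset Strict Implicit. Unset Printing Implicit Defensive.

Section RoughDefs.
Variables (U : finType) (R : rel U).

Definition Rs (x : U) : {set U} := [set y | R x y].

Definition lower_apx (X : {set U}) : {set U} := [set x | Rs x \subset X].
Definition upper_apx (X : {set U}) : {set U} := [set x | Rs x :&: X != set0].

Definition regular (X : {set U}) : bool := X == lower_apx (upper_apx X).

Definition reg_chain_below (A : {set U}) (C : {set {set U}}) : bool :=
  [forall Y in C, regular Y && (Y \subset A)] &&
  [forall Y in C, forall Z in C, (Y \subset Z) || (Z \subset Y)].

Definition h (A : {set U}) : nat :=
  \max_(C : {set {set U}} | reg_chain_below A C) (#|C|).-1.

Definition indep (X : {set U}) : bool :=
  [forall Y : {set U}, regular Y ==> (#|X :&: Y| <= h Y)].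

Definition rank (X : {set U}) : nat :=
  \max_(I : {set U} | (I \subset X) && indep I) #|I|.

End RoughDefs.

Definition serial (U : Type) (R : rel U) : Prop := forall x, exists y, R x y.

(* Main.v *)
Require Import Defs.
From mathcomp Require Import all_boot.
Set Implicit Arguments. Unset Strict Implicit.

Section S.
Variables (U : finType) (R : rel U).
Hypothesis ser : serial R.
Hypothesis tr : transitive R.

Lemma inRs x y : (y \in Rs R x) = R x y. Proof. by rewrite inE. Qed.
Lemma inUp X x : (x \in upper_apx R X) = (Rs R x :&: X != set0). Proof. by rewrite inE. Qed.
Lemma inLo X x : (x \in lower_apx R X) = (Rs R x \subset X). Proof. by rewrite inE. Qed.
Lemma regP X : regular R X ->
  forall x, (x \in X) = [forall y, R x y ==> [exists z, R y z && (z \in X)]].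
Proof.
move/eqP=> HX x; rewrite {1}HX ?(inRs,inUp,inLo,inE).
apply/subsetP/forallP => [H y|H y].
  apply/implyP=> Hxy; have := H y; rewrite ?(inRs,inUp,inLo,inE) => /(_ Hxy) /set0Pn [z].
  by rewrite ?(inRs,inUp,inLo,inE) => /andP[Hz1 Hz2]; apply/existsP; exists z; rewrite Hz1.
rewrite ?(inRs,inUp,inLo,inE) => Hxy; have := H y; rewrite Hxy /= => /existsP [z /andP[Hz1 Hz2]].
by rewrite ?(inRs,inUp,inLo,inE); apply/set0Pn; exists z; rewrite ?(inRs,inUp,inLo,inE) Hz1.
Qed.

Lemma regI X Y : regular R X -> regular R Y -> regular R (X :&: Y).
Proof.
move=> rX rY.
have key : forall x, (x \in X :&: Y) = [forall y, R x y ==> [exists z, R y z && (z \in X :&: Y)]].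
  move=> x; apply/idP/idP.
  - rewrite inE => /andP[xX xY]; apply/forallP => y; apply/implyP => Rxy.
    have [y0 Ry0] := ser y.
    have [t' Ryt Hmin] : exists2 t, R y t & forall w, R y w -> #|Rs R t| <= #|Rs R w|.
      case: (arg_minnP (fun t => #|Rs R t|) Ry0) => t1 H1 H2; by exists t1.
    have Keq : forall w, R t' w -> Rs R w = Rs R t'.
      move=> w Rtw; apply/eqP; rewrite eqEcard Hmin ?andbT; last exact: tr Ryt Rtw.
      by apply/subsetP => v; rewrite ?(inRs,inUp,inLo,inE) => Rwv; exact: tr Rtw Rwv.
    have Rxt : R x t' by exact: tr Rxy Ryt.
    have sub : forall Z, regular R Z -> x \in Z -> forall w, R t' w -> w \in Z.
      move=> Z rZ xZ w Rtw.
      have [z /andP[Rtz zZ]] : exists z, R t' z && (z \in Z).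
        by move: xZ; rewrite (regP rZ) => /forallP /(_ t'); rewrite Rxt => /existsP.
      rewrite (regP rZ); apply/forallP => v; apply/implyP => Rwv.
      apply/existsP; exists z; rewrite zZ andbT.
      have : v \in Rs R w by rewrite inE.
      rewrite Keq // inE => Rtv.
      have : z \in Rs R t' by rewrite inE.
      by rewrite -(Keq v Rtv) inE.
    have [z0 Rtz0] := ser t'.
    have Ryz0 : R y z0 by exact: tr Ryt Rtz0.
    apply/existsP; exists z0; rewrite Ryz0 inE.
    by rewrite (sub X rX xX _ Rtz0) (sub Y rY xY _ Rtz0).
  - move=> /forallP H; rewrite inE (regP rX) (regP rY); apply/andP; split;
      apply/forallP => y; apply/implyP => Rxy; have := H y; rewrite Rxy /=;
      move=> /existsP [z]; rewrite inE => /and3P[a b c]; apply/existsP; exists z;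
      by rewrite a ?b ?c.
apply/eqP/setP => x; rewrite key ?(inRs,inUp,inLo,inE).
apply/idP/idP => [/forallP H|/subsetP H]; [apply/subsetP => y|apply/forallP => y].
  rewrite inRs => Rxy; have := H y; rewrite Rxy /= => /existsP [z /andP[Rz zI]].
  by rewrite inUp; apply/set0Pn; exists z; rewrite in_setI inRs Rz.
apply/implyP => Rxy; have := H y; rewrite inRs inUp Rxy => /(_ isT) /set0Pn [z].
by rewrite in_setI inRs => /andP[Rz zI]; apply/existsP; exists z; rewrite Rz.
Qed.

Lemma chain_max (C : {set {set U}}) :
  (forall Y Z, Y \in C -> Z \in C -> (Y \subset Z) || (Z \subset Y)) ->
  C != set0 -> exists2 M, M \in C & forall Z, Z \in C -> Z \subset M.
Proof.
move=> Hc /set0Pn [Z0 Z0C].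
case: (arg_maxnP (fun M : {set U} => #|M|) Z0C) => M MC Hmax.
exists M => // Z ZC.
case/orP: (Hc Z M ZC MC) => // sMZ.
have : M == Z by rewrite eqEcard sMZ; exact: Hmax.
by move/eqP->.
Qed.

Lemma chain_claim n : forall C : {set {set U}}, #|C| = n.+1 ->
  (forall Y Z, Y \in C -> Z \in C -> (Y \subset Z) || (Z \subset Y)) ->
  exists I : {set U}, [/\ #|I| = n, I \subset \bigcup_(Z in C) Z &
    forall Y, #|I :&: Y| < #|[set Y :&: Z | Z in C]|].
Proof.
elim: n => [|n IH] C cardC Hc.
  exists set0; split; first by rewrite cards0.
    exact: sub0set.
  move=> Y; rewrite set0I cards0 card_gt0.
  have /set0Pn [Z ZC] : C != set0 by rewrite -card_gt0 cardC.
  by apply/set0Pn; exists (Y :&: Z); apply: imset_f.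
have C0 : C != set0 by rewrite -card_gt0 cardC.
have [M MC HM] := chain_max Hc C0.
set C' := C :\ M.
have cardC' : #|C'| = n.+1 by move: cardC; rewrite (cardsD1 M C) MC add1n => -[].
have Hc' : forall Y Z, Y \in C' -> Z \in C' -> (Y \subset Z) || (Z \subset Y).
  by move=> Y Z; rewrite !inE => /andP[_ YC] /andP[_ ZC]; exact: Hc.
have [I' [cI' sI' HI']] := IH C' cardC' Hc'.
have C0' : C' != set0 by rewrite -card_gt0 cardC'.
have [M' M'C HM'] := chain_max Hc' C0'.
have M'M : M' != M by move: M'C; rewrite in_setD1 => /andP[].
have M'C0 : M' \in C by move: M'C; rewrite in_setD1 => /andP[].
have : M' \proper M by rewrite properEneq M'M HM.
case/properP => _ [x xM xM'].
have xI' : x \notin I'.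
  apply/negP => /(subsetP sI') /bigcupP [Z ZC' xZ].
  by move: xM'; rewrite (subsetP (HM' Z ZC')).
exists (x |: I'); split.
- by rewrite cardsU1 xI' cI'.
- apply/subsetP => y; rewrite in_setU1 => /orP [/eqP-> | yI'].
    by apply/bigcupP; exists M.
  have /bigcupP [Z ZC' yZ] := subsetP sI' y yI'.
  by apply/bigcupP; exists Z => //; move: ZC'; rewrite inE => /andP[].
- move=> Y.
  have CE : C = M |: C' by rewrite setD1K.
  case xY: (x \in Y).
    have notin : Y :&: M \notin [set Y :&: Z | Z in C'].
      apply/imsetP => -[Z ZC' EZ].
      have : x \in Y :&: M by rewrite inE xY xM.
      rewrite EZ inE => /andP[_ xZ].
      by move: xM'; rewrite (subsetP (HM' Z ZC')).
    rewrite CE imsetU1 cardsU1 notin add1n ltnS.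
    apply: leq_trans (HI' Y).
    rewrite setIUl; apply: leq_trans (leq_card_setU _ _) _.
    rewrite -add1n leq_add2r.
    by apply: leq_trans (subset_leq_card (subsetIl _ _)) _; rewrite cards1.
  have E : (x |: I') :&: Y = I' :&: Y.
    apply/setP => z; rewrite !inE; case: eqP => // ->.
    by rewrite xY (negbTE xI').
  rewrite E; apply: leq_trans (HI' Y) _.
  by apply: subset_leq_card; apply: imsetS; apply: subsetDl.
Qed.
End S.

Theorem proposition4 (U : finType) (R : rel U) :
  0 < #|U| -> serial R -> transitive R ->
  forall X : {set U}, regular R X -> rank R X = h R X.
Proof.
move=> _ ser tr X rX; apply/eqP; rewrite eqn_leq; apply/andP; split.
  apply/bigmax_leqP => I /andP[sIX indI].
  have := forallP indI X; rewrite rX /= => H.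
  by rewrite (setIidPl sIX) in H.
apply/bigmax_leqP => C /andP[/forallP H1 /forallP H2].
case C0: (C == set0); first by rewrite (eqP C0) cards0.
have : 0 < #|C| by rewrite card_gt0 C0.
case cC: #|C| => [|n] // _.
have Hc : forall Y Z, Y \in C -> Z \in C -> (Y \subset Z) || (Z \subset Y).
  by move=> Y Z YC ZC; have := H2 Y; rewrite YC /= => /forallP /(_ Z); rewrite ZC.
have HC : forall Z, Z \in C -> regular R Z && (Z \subset X).
  by move=> Z ZC; have := H1 Z; rewrite ZC.
have [I [cI sI HI]] := chain_claim cC Hc.
rewrite /= -cI; apply: leq_bigmax_cond; apply/andP; split.
  apply: subset_trans sI _; apply/bigcupsP => Z ZC.
  by case/andP: (HC Z ZC).
apply/forallP => Y; apply/implyP => rY.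
have pos : 0 < #|[set Y :&: Z | Z in C]| by apply: leq_ltn_trans (HI Y).
apply: (@leq_trans (#|[set Y :&: Z | Z in C]|).-1).
  by rewrite -ltnS prednK // HI.
apply: leq_bigmax_cond; apply/andP; split.
  apply/forallP => W; apply/implyP => /imsetP [Z ZC ->].
  by rewrite subsetIl andbT; apply: regI => //; case/andP: (HC Z ZC).
apply/forallP => W; apply/implyP => /imsetP [Z ZC ->].
apply/forallP => W'; apply/implyP => /imsetP [Z' Z'C ->].
by case/orP: (Hc Z Z' ZC Z'C) => s; apply/orP; [left|right]; apply: setIS.
Qed.
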